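(* Fix $C,\mu_0,d,f_0\in\mathbb{R}$ and $a,b\in[-\infty,\infty]$ with $a<0<b$, and let $\mu:(a,b)\to\mathbb{R}$ solve the ODE $\mu'(x)-\mu(x)^2=C$, $\mu(0)=\mu_0$. Define $f,g:(a,b)\to\mathbb{R}$ by $$f(x):=d\int_0^x\exp\Big(2\int_0^y\mu(z)\,\mathrm{d}z\Big)\mathrm{d}y+f_0,\qquad g(x):=\exp\Big(-\int_0^x\mu(z)\,\mathrm{d}z\Big).$$ Then there exist $e_1,e_2,e_3\in\mathbb{R}$ such that $f'(x)=e_1f(x)^2+e_2f(x)+e_3$ on $(a,b)$ with $f(0)=f_0$, and $g$ solves $-g''(x)=Cg(x)$ on $(a,b)$ with $g(0)=1$, $g'(0)=-\mu_0$. *)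

(* Defs.v *)
From Stdlib Require Import Reals.
From Coquelicot Require Import Coquelicot.
Open Scope R_scope.

Definition in_open (a b : Rbar) (x : R) : Prop := Rbar_lt a x /\ Rbar_lt x b.

(* Main.v *)
Require Import Defs.
From Stdlib Require Import Reals Lra.
From Coquelicot Require Import Coquelicot.
Open Scope R_scope.

Lemma deq (h : R -> R) (x l l' : R) : is_derive h x l' -> @eq R l' l -> is_derive h x l.
Proof. intros H ->; exact H. Qed.

Lemma dmul (f g : R -> R) x a b : is_derive f x a -> is_derive g x b ->
  is_derive (fun t => f t * g t) x (a * g x + f x * b).
Proof. intros Hf Hg. apply (is_derive_mult f g x a b Hf Hg). intros; apply Rmult_comm. Qed.

Lemma dplus (f g : R -> R) x a b : is_derive f x a -> is_derive g x b ->
  is_derive (fun t => f t + g t) x (a + b).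
Proof. intros Hf Hg. apply (is_derive_plus f g x a b Hf Hg). Qed.

Lemma dconst (c x : R) : is_derive (fun _ => c) x 0.
Proof. apply (is_derive_const c x). Qed.

Lemma dscal (f : R -> R) k x a : is_derive f x a -> is_derive (fun t => k * f t) x (k * a).
Proof. intro H. apply (is_derive_scal f x k a H). Qed.

Lemma dopp (f : R -> R) x a : is_derive f x a -> is_derive (fun t => - f t) x (- a).
Proof. intro H. apply (is_derive_opp f x a H). Qed.

Lemma dexp (f : R -> R) x a : is_derive f x a ->
  is_derive (fun t => exp (f t)) x (a * exp (f x)).
Proof. intro H. apply (is_derive_comp exp f x (exp (f x)) a (is_derive_exp _) H). Qed.

Lemma io_open a b x : in_open a b x -> locally x (in_open a b).
Proof.
  intro H. apply (open_and _ _ (open_Rbar_gt a) (open_Rbar_lt b)). exact H.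
Qed.

Lemma io_conv a b x z : in_open a b 0 -> in_open a b x ->
  Rmin 0 x <= z <= Rmax 0 x -> in_open a b z.
Proof.
  unfold in_open, Rmin, Rmax. intros [H1 H2] [H3 H4] Hz.
  destruct (Rle_dec 0 x);
  destruct a; destruct b; simpl in *; try tauto; split; try lra; auto.
Qed.

Lemma io_const a b (h : R -> R) : in_open a b 0 ->
  (forall x, in_open a b x -> is_derive h x 0) ->
  forall x, in_open a b x -> h x = h 0.
Proof.
  intros H0 Hd x Hx.
  destruct (Rtotal_order x 0) as [Hl|[He|Hg]].
  - apply (eq_is_derive h x 0); [|exact Hl].
    intros t Ht. apply Hd. apply (io_conv a b x t H0 Hx).
    unfold Rmin, Rmax; destruct (Rle_dec 0 x); lra.
  - now subst.
  - symmetry. apply (eq_is_derive h 0 x); [|exact Hg].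
    intros t Ht. apply Hd. apply (io_conv a b x t H0 Hx).
    unfold Rmin, Rmax; destruct (Rle_dec 0 x); lra.
Qed.

Lemma io_rint a b (F : R -> R) : in_open a b 0 ->
  (forall x, in_open a b x -> continuous F x) ->
  forall x, in_open a b x -> is_derive (RInt F 0) x (F x).
Proof.
  intros H0 HF x Hx. apply (is_derive_RInt F (RInt F 0) 0 x); [|now apply HF].
  apply (filter_imp (in_open a b)); [|now apply io_open].
  intros u Hu. apply (RInt_correct (V:=R_CompleteNormedModule)). apply (ex_RInt_continuous (V:=R_CompleteNormedModule)).
  intros z Hz. apply HF. now apply (io_conv a b u z).
Qed.

Theorem lemma2p1 (C mu0 d f0 : R) (a b : Rbar) (mu : R -> R)
  (Ha : Rbar_lt a 0) (Hb : Rbar_lt 0 b)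
  (Hmu : forall x, in_open a b x -> is_derive mu x (mu x ^ 2 + C))
  (Hmu0 : mu 0 = mu0) :
  let f := fun x => d * RInt (fun y => exp (2 * RInt mu 0 y)) 0 x + f0 in
  let g := fun x => exp (- RInt mu 0 x) in
  (exists e1 e2 e3 : R,
     (forall x, in_open a b x -> is_derive f x (e1 * f x ^ 2 + e2 * f x + e3))
     /\ f 0 = f0)
  /\ (forall x, in_open a b x ->
        ex_derive g x /\ is_derive (Derive g) x (- (C * g x)))
  /\ g 0 = 1 /\ Derive g 0 = - mu0.
Proof.
  intros f g.
  assert (H0 : in_open a b 0) by (split; assumption).
  set (M := RInt mu 0).
  assert (HM : forall x, in_open a b x -> is_derive M x (mu x)).
  { apply io_rint; [exact H0|]. intros x Hx. apply (ex_derive_continuous (K:=R_AbsRing) (V:=R_NormedModule) mu).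
    eexists; apply Hmu; exact Hx. }
  assert (HM0 : M 0 = 0) by (unfold M; rewrite RInt_point; reflexivity).
  set (E := fun y => exp (2 * M y)).
  assert (HE : forall x, in_open a b x -> is_derive E x (2 * mu x * E x)).
  { intros x Hx. unfold E. eapply deq. apply dexp. apply dscal. apply HM; exact Hx.
    cbv beta. ring. }
  assert (HE0 : E 0 = 1) by (unfold E; rewrite HM0, Rmult_0_r; apply exp_0).
  assert (Hf : forall x, in_open a b x -> is_derive f x (d * E x)).
  { intros x Hx. unfold f. eapply deq. apply dplus. apply dscal.
    apply (io_rint a b E H0); [|exact Hx].
    intros y Hy. apply (ex_derive_continuous (K:=R_AbsRing) (V:=R_NormedModule) E). eexists; apply HE; exact Hy.
    apply dconst. unfold E; ring. }
  assert (Hf0 : f 0 = f0). { unfold f. rewrite (RInt_point (V:=R_CompleteNormedModule)). change (@zero (CompleteNormedModule.AbelianMonoid R_AbsRing R_CompleteNormedModule)) with 0; ring. }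
  set (K := mu0 ^ 2 + C).
  assert (HK : forall x, in_open a b x -> mu x ^ 2 + C = K * E x).
  { intros x Hx.
    set (phi := fun t => (mu t * mu t + C) * exp (- (2 * M t))).
    assert (Hp : phi x = phi 0).
    { apply (io_const a b phi H0); [|exact Hx].
      intros t Ht. unfold phi. eapply deq. apply dmul. apply dplus. apply dmul.
      apply Hmu; exact Ht. apply Hmu; exact Ht. apply dconst.
      apply dexp. apply dopp. apply dscal. apply HM; exact Ht. cbv beta. ring. }
    unfold phi in Hp. rewrite HM0, Hmu0, Rmult_0_r, Ropp_0, exp_0 in Hp.
    unfold K, E. replace (mu0 ^ 2 + C) with ((mu0 * mu0 + C) * 1) by ring.
    rewrite <- Hp. rewrite Rmult_assoc, <- exp_plus.
    replace (- (2 * M x) + 2 * M x) with 0 by ring. rewrite exp_0. ring. }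
  split.
  { destruct (Req_dec d 0) as [Hd|Hd].
    - exists 0, 0, 0. split; [|exact Hf0].
      intros x Hx. eapply deq. apply Hf; exact Hx. rewrite Hd; ring.
    - set (e1 := K / d). set (e2 := 2 * (mu0 - e1 * f0)).
      set (e3 := d - e1 * f0 ^ 2 - e2 * f0).
      exists e1, e2, e3. split; [|exact Hf0].
      assert (Hpsi : forall x, in_open a b x -> mu x - e1 * f x = mu0 - e1 * f0).
      { intros x Hx. rewrite <- Hmu0, <- Hf0.
        apply (io_const a b (fun t => mu t - e1 * f t) H0); [|exact Hx].
        intros t Ht. eapply deq.
        apply (is_derive_minus mu (fun t => e1 * f t) t). apply Hmu; exact Ht.
        apply dscal. apply Hf; exact Ht.
        assert (HKt := HK t Ht). simpl in HKt.
        unfold minus, plus, opp; simpl.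
        replace (e1 * (d * E t)) with (K * E t) by (unfold e1; field; exact Hd).
        lra. }
      intros x Hx. eapply deq. apply Hf; exact Hx.
      assert (Hchi : d * E x - (e1 * f x ^ 2 + e2 * f x + e3) = d * E 0 - (e1 * f 0 ^ 2 + e2 * f 0 + e3)).
      { apply (io_const a b (fun t => d * E t - (e1 * f t ^ 2 + e2 * f t + e3)) H0); [|exact Hx].
        intros t Ht. eapply deq.
        apply (is_derive_minus (fun t => d * E t) (fun t => e1 * f t ^ 2 + e2 * f t + e3) t).
        apply dscal. apply HE; exact Ht.
        apply dplus. apply dplus. apply dscal. apply is_derive_pow. apply Hf; exact Ht.
        apply dscal. apply Hf; exact Ht. apply dconst.
        simpl. unfold minus, plus, opp; simpl.
        assert (Hm : mu t = e1 * f t + e2 / 2).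
        { rewrite <- (Rplus_0_r (mu t)). replace (mu t + 0) with (e1 * f t + (mu t - e1 * f t)) by ring.
          rewrite Hpsi by exact Ht. unfold e2; field. }
        rewrite Hm. field. }
      rewrite HE0, Hf0 in Hchi. unfold e3 in *. lra. }
  assert (Hg : forall x, in_open a b x -> is_derive g x (- mu x * g x)).
  { intros x Hx. unfold g. eapply deq. apply dexp. apply dopp. apply HM; exact Hx. cbv beta. ring. }
  assert (HDg : forall x, in_open a b x -> Derive g x = - mu x * g x).
  { intros x Hx. apply is_derive_unique. apply Hg; exact Hx. }
  split; [|split].
  - intros x Hx. split. eexists; apply Hg; exact Hx.
    apply (is_derive_ext_loc (fun t => - mu t * g t)).
    { apply (filter_imp (in_open a b)); [|now apply io_open].
      intros t Ht. symmetry. now apply HDg. }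
    eapply deq. apply (dmul (fun t => - mu t)). apply dopp. apply Hmu; exact Hx.
    apply Hg; exact Hx. ring.
  - unfold g. fold M. rewrite HM0, Ropp_0. apply exp_0.
  - rewrite HDg by exact H0. unfold g. fold M. rewrite HM0, Ropp_0, exp_0, Hmu0. ring.
Qed.
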